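(* The On-CT-RSD mechanism is not universally friendship-truthful: there is an instance (with friendship graph of maximum degree $1$) and a realization of the mechanism's random choices under which some agent obtains strictly higher utility by declaring as her friend an agent who is not her friend than by reporting truthfully.
   Context: Instance: agents $N$, $n=|N|$ plots $\mathcal V$, undirected plot graph $(\mathcal V,\mathcal E)$, valuations $u_i:\mathcal V\to[0,1]\cap\mathbb Q$, reciprocal directed friendship relation $F$ with weights $\phi_{i,j}\ge0$. For an allocation (bijection) $A:N\to\mathcal V$, $U_i(A)=u_i(A(i))+\sum_{(i,j)\in F}\phi_{i,j}\mathbb I(\{A(i),A(j)\}\in\mathcal E)$. On-CT-RSD: repeatedly a uniformly random agent among those who have not yet picked is selected; she picks an available plot and may declare another not-yet-picked agent as her friend, in which case that agent picks an available plot next (without declaring a friend); this continues until all agents have plots; agents choose plots to maximize their utility. A randomized mechanism is universally friendship-truthful if, for every choice of its random bits (even if known to the agents), no agent can increase her utility by misreporting friendship information, regardless of what other agents report and which plots they pick. *)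

(* Defs.v *)
(* Agents and plots are both indexed by 'I_n
   (an allocation is a bijection N -> V, so |V| = |N| = n). *)
From mathcomp Require Import all_boot all_order all_algebra.
Set Implicit Arguments. Unset Strict Implicit. Unset Printing Implicit Defensive.
Import Order.TTheory GRing.Theory Num.Theory.
Local Open Scope ring_scope.

(* An instance: plot graph [edge] (undirected), valuations [val i p] = u_i(p)
   in [0,1] ∩ Q, reciprocal friendship relation [friend] with weights
   [phi i j] = phi_{i,j} >= 0. *)
Record instance (n : nat) := Instance {
  edge : rel 'I_n;
  val : 'I_n -> 'I_n -> rat;
  friend : rel 'I_n;
  phi : 'I_n -> 'I_n -> rat;
  edge_sym : symmetric edge;
  val_bounds : forall i p, 0 <= val i p <= 1;
  friend_sym : symmetric friend;
  friend_irr : irreflexive friend;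
  phi_ge0 : forall i j, 0 <= phi i j }.

Definition max_deg1 n (I : instance n) : Prop :=
  (forall i j k, friend I i j -> friend I i k -> j = k) /\
  (exists i j, friend I i j).

Definition U n (I : instance n) (A : {ffun 'I_n -> 'I_n}) (i : 'I_n) : rat :=
  val I i (A i) + \sum_(j | friend I i j) phi I i j * (edge I (A i) (A j))%:R.

(* Partial allocation during the mechanism: agent -> plot if already picked. *)
Definition state n := {ffun 'I_n -> option 'I_n}.

Definition available n (s : state n) (p : 'I_n) : bool :=
  [forall k, s k != Some p].

Definition assign n (s : state n) (i p : 'I_n) : state n :=
  [ffun k => if k == i then Some p else s k].

(* Behaviour (strategy) of one agent: given the current partial allocation and
   whether she may declare a friend, return the plot she picks and the agent
   (if any) she declares as her friend. *)
Definition strat n := state n -> bool -> 'I_n * option 'I_n.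
Definition profile n := 'I_n -> strat n.

Definition upd n (beh : profile n) (i : 'I_n) (b : strat n) : profile n :=
  fun k => if k == i then b else beh k.

Definition valid_decl n (s : state n) (i : 'I_n) (d : option 'I_n) : bool :=
  if d is Some j then (j != i) && (s j == None) else true.

(* On-CT-RSD with a fixed realization of its random bits, given as a priority
   order [ord] (a permutation of the agents): whenever a random not-yet-picked
   agent must be selected, the first not-yet-picked agent of [ord] is chosen.
   [pend] is the agent declared as friend in the previous step, who picks next
   (without declaring).  An invalid move (unavailable plot, invalid
   declaration) makes the run fail ([None]). *)
Fixpoint run_aux n (ord : seq 'I_n) (beh : profile n) (fuel : nat)
  (s : state n) (pend : option 'I_n) : option (state n) :=
  match fuel with
  | 0 => Some s
  | f.+1 =>
    match pend with
    | Some j =>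
        let p := (beh j s false).1 in
        if (s j == None) && available s p
        then run_aux ord beh f (assign s j p) None else None
    | None =>
        match ohead [seq k <- ord | s k == None] with
        | None => Some s
        | Some i =>
            let p := (beh i s true).1 in
            let d := (beh i s true).2 in
            if available s p && valid_decl s i d
            then run_aux ord beh f (assign s i p) d else None
        end
    end
  end.

Definition complete n (s : state n) : option {ffun 'I_n -> 'I_n} :=
  if [forall k, s k != None] then Some [ffun k => odflt k (s k)] else None.

Definition outcome n (ord : seq 'I_n) (beh : profile n) : option {ffun 'I_n -> 'I_n} :=
  obind (@complete n) (run_aux ord beh n [ffun => None] None).

Definition truthful n (I : instance n) (i : 'I_n) (b : strat n) : Prop :=
  forall (s : state n) (j : 'I_n), (b s true).2 = Some j -> friend I i j.

(* Myopic utility of agent j placing herself on p given the partial allocation. *)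
Definition score n (I : instance n) (s : state n) (j p : 'I_n) : rat :=
  val I j p + \sum_(k | friend I j k)
     phi I j k * (if s k is Some q then (edge I p q)%:R else 0).

Definition greedy n (I : instance n) (j : 'I_n) (b : strat n) : Prop :=
  forall (s : state n) (d : bool), s j = None ->
    available s (b s d).1 /\
    forall q, available s q -> score I s j q <= score I s j (b s d).1.

(* Main.v *)
Require Import Defs.
From mathcomp Require Import all_boot all_order all_algebra.
Import Order.TTheory GRing.Theory Num.Theory.
Local Open Scope ring_scope.

Lemma exists_avail n (s : state n) j : s j = None -> exists p, available s p.
Proof.
move=> sj; case: (pickP (available s)) => [p Hp|Hn]; first by exists p.
exfalso.
have Hall : [set s k | k in 'I_n] = setT.
  apply/setP => x; rewrite inE; case: x => [p|].
  - move: (Hn p); rewrite /available => /negbT; rewrite negb_forall => /existsP [k]; rewrite negbK => /eqP <-.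
    by apply: imset_f.
  - by rewrite -sj imset_f.
have := leq_imset_card s (mem 'I_n); rewrite Hall cardsT card_option.
by rewrite ltnn.
Qed.

Definition a0 : 'I_4 := @Ordinal 4 0 isT.
Definition a1 : 'I_4 := @Ordinal 4 1 isT.
Definition a2 : 'I_4 := @Ordinal 4 2 isT.
Definition a3 : 'I_4 := @Ordinal 4 3 isT.

Definition pairb (p q : 'I_4) : bool :=
  (((p : nat) == 0%N) && ((q : nat) == 1%N)) || (((p : nat) == 1%N) && ((q : nat) == 0%N)).
Definition valb (i p : 'I_4) : bool :=
  (((i : nat) == 0%N) && ((p : nat) == 0%N)) ||
  ((((i : nat) == 1%N) || ((i : nat) == 2%N)) && ((p : nat) == 2%N)).
Definition valq (i p : 'I_4) : rat := (valb i p)%:R.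
Definition phiq (i j : 'I_4) : rat := (((i : nat) == 0%N) && ((j : nat) == 1%N))%:R.

Lemma pairb_sym : symmetric pairb.
Proof. move=> p q; rewrite /pairb orbC; congr orb; exact: andbC. Qed.
Lemma pairb_irr : irreflexive pairb.
Proof. move=> x; rewrite /pairb; by case: x => [[|[|m]] ?]. Qed.
Lemma valq_bounds i p : 0 <= valq i p <= 1.
Proof. by rewrite /valq; case: valb. Qed.
Lemma phiq_ge0 i j : 0 <= phiq i j.
Proof. by rewrite /phiq ler0n. Qed.

Definition I0 : instance 4 :=
  @Instance 4 pairb valq pairb phiq pairb_sym valq_bounds pairb_sym pairb_irr phiq_ge0.

Definition choose (s : state 4) : 'I_4 :=
  if available s a2 then a2 else if available s a1 then a1
  else if available s a0 then a0 else a3.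

Definition beh0 : profile 4 := fun _ s _ => (choose s, None).

Lemma choose_avail (s : state 4) j : s j = None -> available s (choose s).
Proof.
move=> /exists_avail [p Hp]; rewrite /choose.
case: ifP => // H2; case: ifP => // H1; case: ifP => // H0.
case: p Hp => [[|[|[|[|m]]]] pf] Hp //.
- by move: Hp; rewrite (_ : Ordinal pf = a0) ?H0 //; exact: val_inj.
- by move: Hp; rewrite (_ : Ordinal pf = a1) ?H1 //; exact: val_inj.
- by move: Hp; rewrite (_ : Ordinal pf = a2) ?H2 //; exact: val_inj.
Qed.

Lemma score_other (s : state 4) j q : j != a0 -> score I0 s j q = (valb j q)%:R.
Proof.
move=> hj; rewrite /score big1 ?addr0 // => k _.
rewrite /= /phiq (_ : (j : nat) == 0%N = false) ?mul0r //.
by apply/negbTE; move: hj; apply: contra => /eqP h; apply/eqP/val_inj.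
Qed.

Lemma greedy_beh j : j != a0 -> greedy I0 j (beh0 j).
Proof.
move=> hj s d sj; split; first by apply: choose_avail sj.
move=> q hq; rewrite !score_other // ler_nat.
case E: (valb j q) => //=.
have q2 : q = a2.
  apply: val_inj; move: E; rewrite /valb; case/orP => /andP [hj' /eqP //] _.
  by move: hj; rewrite (_ : j = a0) ?eqxx //; apply: val_inj; apply/eqP.
move: E hq; rewrite q2 /choose => E ->. rewrite E //.
Qed.

Lemma run_step_none n (ord : seq 'I_n) (beh : profile n) f (s : state n) i :
  ohead [seq k <- ord | s k == None] = Some i ->
  run_aux ord beh f.+1 s None =
  (if available s (beh i s true).1 && valid_decl s i (beh i s true).2
   then run_aux ord beh f (assign s i (beh i s true).1) (beh i s true).2 else None).
Proof. by move=> /= ->. Qed.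

Definition key (A : {ffun 'I_4 -> 'I_4}) : nat := valb a0 (A a0) + pairb (A a0) (A a1).

Lemma U_key A : U I0 A a0 = (key A)%:R.
Proof.
rewrite /U (bigD1 a1) //= big1 ?addr0.
  by rewrite /valq /phiq /= mul1r /key natrD.
move=> k /andP [hk]; rewrite /pairb /=; case: k hk => [[|[|m]] pk] /= hk // _.
Qed.

Definition dev : strat 4 := fun _ _ => (a0, Some a2).
Definition Adev : {ffun 'I_4 -> 'I_4} := [ffun k => k].

Definition ord4 : seq 'I_4 := [:: a0; a1; a2; a3].

Lemma ord4_perm : perm_eq ord4 (enum 'I_4).
Proof.
apply: uniq_perm => //; first exact: enum_uniq.
by move=> x; rewrite mem_enum; case: x => [[|[|[|[|m]]]] pf].
Qed.

Lemma avail4 (s : state 4) p :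
  available s p = [&& s a0 != Some p, s a1 != Some p, s a2 != Some p & s a3 != Some p].
Proof.
apply/forallP/and4P; first by move=> H; split; apply: H.
case=> h0 h1 h2 h3 [[|[|[|[|m]]]] pf] //.
- by rewrite (_ : Ordinal pf = a0) //; apply: val_inj.
- by rewrite (_ : Ordinal pf = a1) //; apply: val_inj.
- by rewrite (_ : Ordinal pf = a2) //; apply: val_inj.
- by rewrite (_ : Ordinal pf = a3) //; apply: val_inj.
Qed.

Arguments run_aux : simpl never.
Arguments assign : simpl never.
Arguments available : simpl never.
Arguments choose : simpl never.
Arguments complete : simpl never.

Lemma stepN n (ord : seq 'I_n) beh f (s : state n) :
  run_aux ord beh f.+1 s None =
  match ohead [seq k <- ord | s k == None] with
  | None => Some s
  | Some i =>
      if available s (beh i s true).1 && valid_decl s i (beh i s true).2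
      then run_aux ord beh f (assign s i (beh i s true).1) (beh i s true).2 else None
  end.
Proof. by []. Qed.

Lemma stepS n (ord : seq 'I_n) beh f (s : state n) j :
  run_aux ord beh f.+1 s (Some j) =
  if (s j == None) && available s (beh j s false).1
  then run_aux ord beh f (assign s j (beh j s false).1) None else None.
Proof. by []. Qed.

Lemma step0 n (ord : seq 'I_n) beh (s : state n) pend :
  run_aux ord beh 0 s pend = Some s.
Proof. by []. Qed.

Lemma assignE n (s : state n) i p k : assign s i p k = if k == i then Some p else s k.
Proof. by rewrite /assign ffunE. Qed.

Lemma complete4 (s : state 4) : complete s =
  if [&& s a0 != None, s a1 != None, s a2 != None & s a3 != None]
  then Some [ffun k => odflt k (s k)] else None.
Proof.
rewrite /complete; congr (if _ then _ else _).
apply/forallP/and4P; first by move=> H; split; apply: H.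
case=> h0 h1 h2 h3 [[|[|[|[|m]]]] pf] //.
- by rewrite (_ : Ordinal pf = a0) //; apply: val_inj.
- by rewrite (_ : Ordinal pf = a1) //; apply: val_inj.
- by rewrite (_ : Ordinal pf = a2) //; apply: val_inj.
- by rewrite (_ : Ordinal pf = a3) //; apply: val_inj.
Qed.

Ltac ev := repeat (rewrite ?assignE ?ffunE ?avail4 ?complete4 /=).
Ltac runall := repeat (rewrite ?stepN ?stepS ?step0; ev; rewrite ?/choose; ev).

Lemma dev_out : outcome ord4 (upd beh0 a0 dev) = Some Adev.
Proof.
rewrite /outcome. runall.
congr Some; apply/ffunP => k; rewrite !ffunE ?assignE ?ffunE.
by case: k => [[|[|[|[|m]]]] pf] //=; apply: val_inj.
Qed.

Lemma U_dev : U I0 Adev a0 = 2.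
Proof. by rewrite U_key /key !ffunE. Qed.

Lemma truthful_case (b : strat 4) : truthful I0 a0 b ->
  forall A, outcome ord4 (upd beh0 a0 b) = Some A -> U I0 A a0 < U I0 Adev a0.
Proof.
move=> Htr A; rewrite U_dev U_key.
rewrite /outcome stepN; ev.
have -> : upd beh0 a0 b a0 = b by rewrite /upd eqxx.
case Hb : (b [ffun=> None] true) => [p d].
have Hd : d = None \/ d = Some a1.
  case: d Hb => [j|] Hb; last by left.
  right; have := Htr _ _ (f_equal snd Hb).
  by case: j {Hb} => [[|[|[|[|m]]]] pj] //= _; congr Some; apply: val_inj.
case: Hd => ->; case: p {Hb} => [[|[|[|[|m]]]] pp] //; runall;
  move=> [<-]; rewrite /key !ffunE ?assignE ?ffunE /=; rewrite ?ltr_nat //.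
Qed.

Theorem proposition4p5 :
  exists (n : nat) (I : instance n), max_deg1 I /\
  exists (ord : seq 'I_n), perm_eq ord (enum 'I_n) /\
  exists (i : 'I_n) (beh : profile n),
    (forall j, j != i -> truthful I j (beh j) /\ greedy I j (beh j)) /\
    exists (dev : strat n) (Adev : {ffun 'I_n -> 'I_n}),
      outcome ord (upd beh i dev) = Some Adev /\
      ~ truthful I i dev /\
      forall (b : strat n), truthful I i b ->
        forall A, outcome ord (upd beh i b) = Some A -> U I A i < U I Adev i.
Proof.
exists 4%N, I0; split.
  split; last by exists a0, a1.
  move=> i j k /=.
  case: i => [[|[|m]] pi] //=; case: j => [[|[|mj]] pj] //=;
    case: k => [[|[|mk]] pk] //= _ _; by apply: val_inj.
exists ord4; split; first exact: ord4_perm.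
exists a0, beh0; split.
  move=> j hj; split; last exact: greedy_beh.
  by move=> s k.
exists dev, Adev; split; first exact: dev_out.
split; last exact: truthful_case.
by move=> /(_ [ffun=> None] a2 erefl).
Qed.
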